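(* Let $1\le a<b<c\le n$ and let $M$ be the rank-$3$ shifted matroid on $[n]$ indexed by $\{a,b,c\}$, i.e. the matroid with bases $\{\{a',b',c'\}:1\le a'<b'<c'\le n,\ a'\le a,\ b'\le b,\ c'\le c\}$. Then $M$ is DJS if and only if $\lfloor\frac{c-b}{2}\rfloor<a$.
   Context: A rank-$3$ matroid $M$ on $[n]$ is called DJS if, letting $E$ be the set of non-loop elements of $M$, every linear ordering $w_1w_2\cdots w_m$ of $E$ has three consecutive elements $\{w_j,w_{j+1},w_{j+2}\}$ forming a basis of $M$. *)

(* Defs.v *)
From mathcomp Require Import all_boot.
Set Implicit Arguments. Unset Strict Implicit. Unset Printing Implicit Defensive.

(* A rank-3 matroid on the ground set [n] = {1,...,n} is given here by its
   family of bases; a 3-element subset of [n] is encoded as a duplicate-free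
   sequence of length 3 (order irrelevant: the predicates below are invariant
   under permutation). *)

Definition shifted_basis (n a b c : nat) (T : seq nat) : bool :=
  [exists a' : 'I_n.+1, exists b' : 'I_n.+1, exists c' : 'I_n.+1,
    [&& 1 <= a', a' < b', b' < c', c' <= n, a' <= a, b' <= b, c' <= c
      & perm_eq T [:: val a'; val b'; val c']]].

Definition nonloop (n : nat) (B : seq nat -> bool) (x : nat) : Prop :=
  1 <= x <= n /\ exists T : seq nat, B T /\ x \in T.

Definition DJS (n : nat) (B : seq nat -> bool) : Prop :=
  forall w : seq nat, uniq w -> (forall x, x \in w <-> nonloop n B x) ->
    exists j, j.+2 < size w /\ B [:: nth 0 w j; nth 0 w j.+1; nth 0 w j.+2].

(* Main.v *)
Require Import Defs.
From mathcomp Require Import all_boot zify.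

Definition cond (a b : nat) (T : seq nat) :=
  has (fun t => t <= a) T && (1 < count (fun t => t <= b) T).

Lemma cond_perm a b T T' : perm_eq T T' -> cond a b T = cond a b T'.
Proof. by move=> P; rewrite /cond (perm_has _ P) ((permP P) _). Qed.

Lemma sb_perm n a b c T T' : perm_eq T T' ->
  shifted_basis n a b c T = shifted_basis n a b c T'.
Proof.
move=> P; apply/existsP/existsP => -[x /existsP[y /existsP[z H]]];
 exists x; apply/existsP; exists y; apply/existsP; exists z;
 move: H => /and5P[h1 h2 h3 h4 /and4P[h5 h6 h7 h8]];
 rewrite h1 h2 h3 h4 h5 h6 h7 /=.
- by apply: perm_trans h8; rewrite perm_sym.
- exact: perm_trans P h8.
Qed.

Lemma sb_cond n a b c T : shifted_basis n a b c T ->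
  [/\ cond a b T, uniq T & all (fun t => 0 < t <= c) T].
Proof.
move=> /existsP[x /existsP[y /existsP[z H]]].
move: H => /and5P[h1 h2 h3 h4 /and4P[h5 h6 h7 h8]].
rewrite (cond_perm _ _ _ _ h8) (perm_uniq h8) (perm_all _ h8) /cond /= h5 /=.
have xb : x <= b by lia.
rewrite xb h6 /=.
split; [by [] | |]; rewrite ?inE; lia.
Qed.

Lemma sb_sorted n a b c x y z : 1 <= x -> x < y -> y < z -> z <= c -> c <= n ->
  x <= a -> y <= b -> shifted_basis n a b c [:: x; y; z].
Proof.
move=> h1 h2 h3 h4 hn h5 h6.
apply/existsP; exists (inord x); apply/existsP; exists (inord y);
apply/existsP; exists (inord z).
rewrite !inordK; try lia.
apply/and5P; split; try lia. apply/and4P; split; try lia.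
have e : forall m, m <= n -> \val (@inord n m) = m by move=> m hm; apply: inordK; lia.
by rewrite !e ?perm_refl //; lia.
Qed.

Lemma cond_sb n a b c x y z : c <= n -> uniq [:: x; y; z] ->
  all (fun t => 0 < t <= c) [:: x; y; z] -> cond a b [:: x; y; z] ->
  shifted_basis n a b c [:: x; y; z].
Proof.
move=> hn U Al C.
have key : forall p q r, perm_eq [:: x; y; z] [:: p; q; r] -> p < q < r ->
    shifted_basis n a b c [:: x; y; z].
  move=> p q r P /andP[l1 l2]; rewrite (sb_perm _ _ _ _ _ _ P).
  move: C Al; rewrite (cond_perm _ _ _ _ P) (perm_all _ P) /cond /=.
  case/andP => H1 H2 /and4P[A1 A2 A3 _].
  apply: sb_sorted => //; try lia.
have sw : forall u v w : nat, perm_eq [:: u; v; w] [:: v; u; w].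
  by move=> u v w; apply/permP => pr /=; lia.
have rt : forall u v w : nat, perm_eq [:: u; v; w] [:: v; w; u].
  by move=> u v w; apply/permP => pr /=; lia.
move: U; rewrite /= !inE !negb_or => /andP[/andP[xy xz] /andP[yz _]].
case: (ltngtP x y) xy => // hxy _; case: (ltngtP y z) yz => // hyz _;
case: (ltngtP x z) xz => // hxz _.
all: first [ lia
  | (apply: (key x y z); [apply/permP => pr /=; lia | lia])
  | (apply: (key x z y); [apply/permP => pr /=; lia | lia])
  | (apply: (key y x z); [apply/permP => pr /=; lia | lia])
  | (apply: (key y z x); [apply/permP => pr /=; lia | lia])
  | (apply: (key z x y); [apply/permP => pr /=; lia | lia])
  | (apply: (key z y x); [apply/permP => pr /=; lia | lia]) ].
Qed.

Definition good a b (u : seq nat) := forall s1 s3 x y z,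
  u = s1 ++ [:: x; y; z] ++ s3 -> ~~ cond a b [:: x; y; z].

Definition ee b (r : seq nat) := match r with
  | [::] => 2 | [:: h] => if b < h then 2 else 0
  | h :: g :: _ => if b < h then (if b < g then 2 else 1) else 0 end.

Lemma claim a b : a <= b -> forall s r, 3 <= size (rev r ++ s) -> good a b (rev r ++ s) ->
  2 * count (fun t => t <= a) s <= count (fun t => b < t) s + ee b r.
Proof.
move=> ab; elim=> [|x s IH] r hs g /=; first lia.
have := IH (x :: r); rewrite rev_cons cat_rcons => /(_ hs g) IH'.
case: (ltnP b x) => hx.
- have -> : (x <= a) = false by apply/negbTE; rewrite -ltnNge; lia.
  move: IH'; rewrite /= hx; case: r hs g => [|h [|g' r]] /= hs g.
  + lia.
  + case: (ltnP b h) => hh //=; lia.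
  + case: (ltnP b h) => hh //=; case: (ltnP b g') => //=; lia.
have E : ee b (x :: r) = 0 by case: r {IH IH' hs g} => [|? ?] /=; rewrite ltnNge hx.
rewrite E in IH'.
case: (leqP x a) => hxa /=; last first.
  lia.
clear IH; case: r hs g IH' E => [|h [|g' r]] hs g IH' E /=.
- lia.
- case: (ltnP b h) => hh; first lia.
  move: hs g; case: s IH' => [|y s] IH' hs g; first by move: hs; rewrite /=.
  have := g [::] s h x y erefl; rewrite /cond /= hxa; lia.
- have := g (rev r) (s) g' h x.
  rewrite !rev_cons -!cats1 -!catA /= => /(_ erefl).
  rewrite /cond /= hxa /=.
  case: (ltnP b h) => hh; case: (ltnP b g') => hg //=; lia.
Qed.

Lemma window (u : seq nat) j : j.+2 < size u ->
  u = take j u ++ [:: nth 0 u j; nth 0 u j.+1; nth 0 u j.+2] ++ drop j.+3 u.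
Proof.
move=> h; rewrite -{1}(cat_take_drop j u); congr (_ ++ _).
rewrite (drop_nth 0) ?(drop_nth 0 (n := j.+1)) ?(drop_nth 0 (n := j.+2)) //; lia.
Qed.

Lemma good_rev a b u : good a b u -> good a b (rev u).
Proof.
move=> g s1 s3 x y z e.
have : u = rev s3 ++ [:: z; y; x] ++ rev s1.
  by rewrite -[u]revK e !rev_cat -catA.
move=> /g; rewrite (cond_perm _ _ _ [:: x; y; z]) //.
by apply/permP => p /=; lia.
Qed.

Lemma nonloop_iff n a b c x : 1 <= a -> a < b -> b < c -> c <= n ->
  nonloop n (shifted_basis n a b c) x <-> 0 < x <= c.
Proof.
move=> h1 h2 h3 h4; split.
- case=> _ [T [/sb_cond [_ _ /allP H] xT]]; exact: H.
- move=> hx; split; first lia.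
  case: (leqP x a) => ha.
    exists [:: x; b; c]; split; last by rewrite inE eqxx.
    apply: sb_sorted; lia.
  case: (leqP x b) => hb.
    exists [:: 1; x; c]; split; last by rewrite !inE eqxx orbT.
    apply: sb_sorted; lia.
  exists [:: 1; b; x]; split; last by rewrite !inE eqxx !orbT.
  apply: sb_sorted; lia.
Qed.

Lemma count_le_iota a k : count (fun t => t <= a) (iota 1 k) = minn a k.
Proof.
elim: k => [|k IH]; first by rewrite minn0.
have := iotaD 1 k 1; rewrite addn1 => ->.
rewrite count_cat IH /=; lia.
Qed.

Lemma count_gt_iota b k : count (fun t => b < t) (iota 1 k) = k - b.
Proof.
elim: k => [|k IH] //.
have := iotaD 1 k 1; rewrite addn1 => ->.
rewrite count_cat IH /=; lia.
Qed.

Fixpoint okb a b (u : seq nat) : bool :=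
  match u with
  | x :: t => (match t with y :: z :: _ => ~~ cond a b [:: x; y; z] | _ => true end)
              && okb a b t
  | [::] => true end.

Lemma okb_good a b u : okb a b u -> good a b u.
Proof.
move=> + s1; elim: s1 u => [|h s1 IH] u.
  by move=> H s3 x y z E; move: H; rewrite E => /= /andP[].
move=> H s3 x y z E; move: H; rewrite E => /= /andP[_ /IH]; apply; reflexivity.
Qed.

Lemma okb_noA a b t : all (fun x => a < x) t -> okb a b t.
Proof.
elim: t => //= x t IH /andP[hx ht]; rewrite IH // andbT.
case: t ht {IH} => [|y [|z t]] //= /and3P[hy hz _].
by rewrite /cond /= (leqNgt x) (leqNgt y) (leqNgt z) hx hy hz.
Qed.

Fixpoint blk b i := match i with 0 => [::]
  | i'.+1 => i'.+1 :: (b + 2 * i' + 1) :: (b + 2 * i' + 2) :: blk b i' end.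

Lemma size_blk b i : size (blk b i) = 3 * i.
Proof. elim: i => //= i ->; lia. Qed.

Lemma mem_blk b i x : (x \in blk b i) = (0 < x <= i) || (b < x <= b + 2 * i).
Proof.
elim: i => [|i IH] /=; first by rewrite in_nil; lia.
rewrite !inE IH; apply/idP/idP; lia.
Qed.
Ltac fin := repeat (match goal with
  | |- is_true (_ && _) => apply/andP; split
  | |- is_true (~~ _) => apply/negP
  | |- is_true true => done end); try lia.

Lemma okb_blk a b i t : a <= b -> i <= a -> all (fun x => a < x) t ->
  okb a b (blk b i ++ t).
Proof.
move=> ab; elim: i => [|i IH] hi ht /=; first exact: okb_noA.
rewrite IH ?andbT //; last lia.
case: i {IH} hi => [|i] hi /=.
  case: t ht => [|r1 [|r2 t]] /=; rewrite /cond /= => H; fin.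
rewrite /cond /=; fin.
Qed.

Lemma not_djs n a b c : 1 <= a -> a < b -> b < c -> c <= n ->
  a.*2 <= c - b -> ~ DJS n (shifted_basis n a b c).
Proof.
move=> h1 h2 h3 h4 h5 D.
pose w := blk b a ++ iota (b + 2 * a + 1) (c - b - 2 * a) ++ iota (a + 1) (b - a).
have memw : forall x, (x \in w) = (0 < x <= c).
  move=> x; rewrite !mem_cat mem_blk !mem_iota; apply/idP/idP; lia.
have szw : size w = c by rewrite !size_cat size_blk !size_iota; lia.
have uw : uniq w.
  apply: (leq_size_uniq (iota_uniq 1 c)); last by rewrite szw size_iota.
  by move=> x; rewrite memw mem_iota; lia.
have ok : okb a b w.
  apply: okb_blk => //; first lia.
  rewrite all_cat; apply/andP; split; apply/allP => x; rewrite mem_iota; lia.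
have mw : forall x, x \in w <-> nonloop n (shifted_basis n a b c) x.
  by move=> x; rewrite nonloop_iff // memw.
have [j [hj B]] := D w uw mw.
have [C _ _] := sb_cond _ _ _ _ _ B.
have := okb_good _ _ _ ok _ _ _ _ _ (window _ _ hj).
by rewrite C.
Qed.

Lemma uniq_mid (s1 t s3 : seq nat) : uniq (s1 ++ t ++ s3) -> uniq t.
Proof. by rewrite !cat_uniq => /and3P[_ _ /andP[]]. Qed.

Lemma nth_mid (s1 s3 : seq nat) x y z k : k < 3 ->
  nth 0 (s1 ++ [:: x; y; z] ++ s3) (size s1 + k) = nth 0 [:: x; y; z] k.
Proof.
move=> hk; rewrite nth_cat ltnNge leq_addr /= addKn.
by case: k hk => [|[|[|]]].
Qed.

Lemma djs n a b c : 1 <= a -> a < b -> b < c -> c <= n ->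
  c - b < a.*2 -> DJS n (shifted_basis n a b c).
Proof.
move=> h1 h2 h3 h4 h5 w uw mw.
have memw : forall x, (x \in w) = (0 < x <= c).
  move=> x; apply/idP/idP => [/mw|hx]; first by rewrite nonloop_iff.
  by apply/mw; rewrite nonloop_iff.
have pw : perm_eq w (iota 1 c).
  by apply: uniq_perm => // [|x]; [exact: iota_uniq | rewrite memw mem_iota; lia].
have szw : size w = c by rewrite (perm_size pw) size_iota.
set P := fun j => shifted_basis n a b c [:: nth 0 w j; nth 0 w j.+1; nth 0 w j.+2].
case hh : (has P (iota 0 (size w - 2))).
  move/hasP: hh => [j]; rewrite mem_iota => hj Pj; exists j; split => //; lia.
exfalso.
have g : good a b w.
  move=> s1 s3 x y z e; apply/negP => C.
  have U : uniq [:: x; y; z] by apply: (uniq_mid s1 _ s3); rewrite -e.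
  have Al : all (fun t => 0 < t <= c) [:: x; y; z].
    apply/allP => t ht; rewrite -memw e !mem_cat ht orbT //.
  have := cond_sb _ _ _ _ _ _ _ h4 U Al C => Bx.
  move/hasP: hh; apply; exists (size s1).
    rewrite mem_iota szw; move: (congr1 size e); rewrite !size_cat /=; lia.
  have n0 := nth_mid s1 s3 x y z 0 isT; rewrite addn0 in n0.
  have n1 := nth_mid s1 s3 x y z 1 isT; rewrite addn1 in n1.
  have n2 := nth_mid s1 s3 x y z 2 isT; rewrite addn2 in n2.
  by rewrite /P e n0 n1 n2.
have bw : b \in w by rewrite memw; lia.
move: uw mw memw pw szw P hh g; case/splitPr: bw => L R uw mw memw pw szw P hh g.
have c3 : 3 <= size (rev (b :: rev L) ++ R).
  by rewrite rev_cons revK cat_rcons szw; lia.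
have gR := claim a b (ltnW h2) R (b :: rev L) c3.
rewrite rev_cons revK cat_rcons in gR; have {gR} := gR g.
have -> : ee b (b :: rev L) = 0 by case: (rev L) => [|? ?] /=; rewrite ltnn.
move=> gR.
have c3' : 3 <= size (rev (b :: R) ++ rev L).
  by rewrite -rev_cat size_rev szw; lia.
have gL := claim a b (ltnW h2) (rev L) (b :: R) c3'.
rewrite -rev_cat in gL; have {gL} := gL (good_rev _ _ _ g).
have -> : ee b (b :: R) = 0 by case: R {gR c3 c3' uw mw memw pw szw P hh g} => [|? ?] /=; rewrite ltnn.
rewrite !count_rev => gL.
have cA := permP pw (fun t => t <= a).
have cC := permP pw (fun t => b < t).
rewrite count_le_iota count_cat /= in cA.
rewrite count_gt_iota count_cat /= in cC.
move: cA cC; rewrite ltnn leqNgt h2 /=; lia.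
Qed.

Theorem proposition6p8 (n a b c : nat) :
  1 <= a -> a < b -> b < c -> c <= n ->
  (DJS n (shifted_basis n a b c) <-> (c - b)./2 < a).
Proof.
move=> h1 h2 h3 h4; rewrite ltn_half_double; split.
- move=> D; rewrite ltnNge; apply/negP => h5.
  exact: (not_djs _ _ _ _ h1 h2 h3 h4 h5 D).
- exact: djs.
Qed.
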